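(* Let $k$ be a positive integer and let $M(2k)$ be the perfect matching derangement graph. Then: (1) $M(2k)$ is vertex transitive, and the natural action of $\mathrm{Sym}(2k)$ on perfect matchings (induced by permuting the vertices of $K_{2k}$) gives a subgroup of automorphisms of $M(2k)$ acting transitively on its vertices; (2) the maximum size of a clique in $M(2k)$ is $2k-1$; (3) the maximum size of a coclique (independent set) in $M(2k)$ is $(2k-3)!!$.
   Context: The perfect matching derangement graph $M(2k)$ has as vertices all perfect matchings of the complete graph $K_{2k}$ (sets of $k$ pairwise vertex-disjoint edges), two perfect matchings being adjacent if and only if they have no edge in common. For odd $n$, $n!!=n(n-2)\cdots1$, with $(-1)!!=1$. *)

(* Defs.v *)
From mathcomp Require Import all_boot fingroup perm.
Set Implicit Arguments. Unset Strict Implicit. Unset Printing Implicit Defensive.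

(* Edges of K_n are 2-subsets of 'I_n.  A perfect matching is a set of edges
   that partitions the vertex set [set: 'I_n] into 2-element blocks. *)
Definition is_pm (n : nat) (M : {set {set 'I_n}}) : bool :=
  partition M [set: 'I_n] && [forall e in M, #|e| == 2].

Definition pm (n : nat) := {M : {set {set 'I_n}} | is_pm M}.

Definition pm_adj (n : nat) (M N : pm n) : bool :=
  [disjoint val M & val N].

Definition pm_aut (n : nat) (f : pm n -> pm n) : Prop :=
  bijective f /\ forall M N, pm_adj (f M) (f N) = pm_adj M N.

Definition pm_act_set (n : nat) (s : {perm 'I_n}) (M : {set {set 'I_n}})
  : {set {set 'I_n}} := [set [set s x | x in e] | e : {set 'I_n} in M].

Definition is_clique (n : nat) (S : {set pm n}) : Prop :=
  {in S &, forall M N, M != N -> pm_adj M N}.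

Definition is_coclique (n : nat) (S : {set pm n}) : Prop :=
  {in S &, forall M N, ~~ pm_adj M N}.

(* (2m-1)!! = 1 * 3 * ... * (2m-1), so that (2k-3)!! = odd_dfact k.-1,
   with (-1)!! = odd_dfact 0 = 1. *)
Definition odd_dfact (m : nat) : nat := \prod_(i < m) (2 * i + 1).

(* Main.v *)
Require Import Defs.
From mathcomp Require Import all_boot fingroup perm zify.
Set Implicit Arguments. Unset Strict Implicit. Unset Printing Implicit Defensive.

Section PM.
Variable T : finType.
Implicit Types (A : {set T}) (M : {set {set T}}).

Definition pmon A := [set M : {set {set T}} | partition M A && [forall e in M, #|e| == 2]].

Lemma pmonP A M : reflect (partition M A /\ forall e, e \in M -> #|e| = 2) (M \in pmon A).
Proof.
rewrite inE; apply: (iffP andP) => [[H /forall_inP F]|[H F]]; split => //.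
  by move=> e /F/eqP.
by apply/forall_inP=> e /F ->.
Qed.

Lemma pm_add x y A M : x \in A -> y \in A -> x != y -> M \in pmon (A :\ x :\ y) ->
  [set x; y] |: M \in pmon A /\ [set x; y] \notin M.
Proof.
move=> xA yA xy /pmonP[P C]; split.
  apply/pmonP; split.
    have -> : A = [set x; y] :|: (A :\ x :\ y).
      apply/setP=> z; rewrite !inE; case: (z =P x) => [->|_]; first by rewrite xA.
      by case: (z =P y) => [->|]; rewrite ?yA ?orbT.
    apply: partitionU1 => //.
      by apply/set0Pn; exists x; rewrite !inE eqxx.
    rewrite -setI_eq0; apply/eqP/setP => z; rewrite !inE.
    by case: (z == x); case: (z == y).
  move=> e /setU1P[->|/C//]; by rewrite cards2 xy.
apply/negP => /(partitionS P) /subsetP /(_ x); rewrite !inE eqxx /= andbF.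
by move=> H; have := H isT.
Qed.

Lemma pm_rem x y A M : M \in pmon A -> [set x; y] \in M ->
  M :\ [set x; y] \in pmon (A :\ x :\ y).
Proof.
move=> /pmonP[P C] B; apply/pmonP; split.
  have -> : A :\ x :\ y = A :\: [set x; y].
    by apply/setP=> z; rewrite !inE negb_or andbA [(z != y) && _]andbC.
  exact: partitionD1.
by move=> e /setD1P[_ /C].
Qed.

Lemma pm_sub A M e : M \in pmon A -> e \in M -> e \subset A.
Proof. by move=> /pmonP[P _]; apply: partitionS. Qed.

Lemma pm_partner x A M : M \in pmon A -> x \in A -> exists2 y, y != x & [set x; y] \in M.
Proof.
move=> /pmonP[P C] xA.
have xc : x \in cover M by rewrite (cover_partition P).
have Bm := pblock_mem xc; have := C _ Bm; move/eqP/cards2P=> [a [b [ab E]]].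
have := mem_pblock M x; rewrite xc E !inE => /orP[]/eqP xe.
  by exists b; rewrite xe 1?eq_sym // -E.
exists a; first by rewrite xe.
by rewrite xe [[set b; a]]setUC -E.
Qed.

Lemma pm_uniq x y z A M : M \in pmon A -> [set x; y] \in M -> [set x; z] \in M ->
  y != x -> y = z.
Proof.
move=> /pmonP[P C] B1 B2 yx.
have E : [set x; y] = [set x; z].
  apply/eqP; apply: contraT => ne.
  have := (@trivIsetP _ M (partition_trivIset P)) _ _ B1 B2 ne.
  by move/disjointFr; move/(_ x); rewrite !inE eqxx /= => H; have := H isT.
have : y \in [set x; z] by rewrite -E !inE eqxx orbT.
by rewrite !inE (negbTE yx) => /eqP.
Qed.


Lemma card_pmon_fix x y A : x \in A -> y \in A -> x != y ->
  #|[set M in pmon A | [set x; y] \in M]| = #|pmon (A :\ x :\ y)|.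
Proof.
move=> xA yA xy.
have -> : [set M in pmon A | [set x; y] \in M] =
          (fun M' => [set x; y] |: M') @: pmon (A :\ x :\ y).
  apply/setP => M; rewrite inE; apply/andP/imsetP.
    move=> [MA BM]; exists (M :\ [set x; y]); first exact: pm_rem.
    by rewrite setD1K.
  move=> [M' M'A ->]; have [H1 H2] := pm_add xA yA xy M'A.
  by rewrite H1 setU11.
apply: card_in_imset => M1 M2 H1 H2 /= E.
have [_ N1] := pm_add xA yA xy H1; have [_ N2] := pm_add xA yA xy H2.
by rewrite -(setU1K N1) E setU1K.
Qed.

Definition partner x M : T := odflt x [pick y | (y != x) && ([set x; y] \in M)].

Lemma partnerP x y A M : M \in pmon A -> x \in A -> y != x ->
  (partner x M == y) = ([set x; y] \in M).
Proof.
move=> MA xA yx; rewrite /partner; case: pickP => [z /andP[zx Bz] | none] /=.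
  apply/eqP/idP => [<- //|By]; apply: esym; exact: (pm_uniq MA By Bz).
have [z zx Bz] := pm_partner MA xA; by have := none z; rewrite zx Bz.
Qed.

Lemma card_pmon_rec x A : x \in A ->
  #|pmon A| = \sum_(y in A :\ x) #|pmon (A :\ x :\ y)|.
Proof.
move=> xA.
rewrite -sum1_card (partition_big (partner x) (mem (A :\ x))) /=; last first.
  move=> M MA; have [z zx Bz] := pm_partner MA xA.
  have := partnerP MA xA zx; rewrite Bz => /eqP ->.
  by rewrite !inE zx (subsetP (pm_sub MA Bz)) // !inE eqxx orbT.
apply: eq_bigr => y; rewrite !inE => /andP[yx yA].
rewrite -card_pmon_fix // 1?eq_sym // -sum1_card; apply: eq_bigl => M.
rewrite [M \in [set _ in _ | _]]inE; case MA: (M \in pmon A) => //=; exact: (partnerP MA).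
Qed.

Lemma pmon0 : pmon set0 = [set set0].
Proof.
apply/setP => M; rewrite !inE partition_set0.
case: (M =P set0) => [->|] //=; apply/forall_inP => e; by rewrite inE.
Qed.

Lemma card_pmon m A : #|A| = (2 * m)%N -> #|pmon A| = odd_dfact m.
Proof.
elim: m A => [|m IH] A cA.
  move: cA; rewrite muln0 => /eqP; rewrite cards_eq0 => /eqP ->.
  by rewrite pmon0 cards1 /odd_dfact big_ord0.
have : 0 < #|A| by rewrite cA muln_gt0.
move/card_gt0P => [x xA].
have cx : #|A :\ x| = (2 * m).+1.
  have := cardsD1 x A; rewrite xA cA mulnS add1n add2n => -[] <-//.
rewrite (card_pmon_rec xA) (eq_bigr (fun _ => odd_dfact m)); last first.
  move=> y; rewrite !inE => /andP[yx yA]; apply: IH.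
  have := cardsD1 y (A :\ x); rewrite !inE yx yA cx /=.
  by rewrite add1n => -[].
rewrite sum_nat_const cx.
by rewrite /odd_dfact big_ord_recr /= mulnC addn1.
Qed.

End PM.

Section Act.
Variable T : finType.
Implicit Types (A : {set T}) (M : {set {set T}}) (s t : {perm T}).

Definition actset s M : {set {set T}} := [set [set s x | x in e] | e : {set T} in M].

Lemma imset_fixin s (e : {set T}) : {in e, forall x, s x = x} -> [set s x | x in e] = e.
Proof.
move=> H; apply/setP => z; apply/imsetP/idP => [[w we ->]|ze]; first by rewrite H.
by exists z; rewrite ?H.
Qed.

Lemma imset_fix s A : {in ~: A, forall x, s x = x} -> [set s x | x in A] = A.
Proof.
move=> H; apply/eqP; rewrite eqEcard card_imset; last exact: perm_inj.
rewrite leqnn andbT; apply/subsetP => _ /imsetP[w wA ->].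
apply: contraT => sw; have := H (s w); rewrite inE => /(_ sw) /perm_inj E.
by move: sw; rewrite E wA.
Qed.

Lemma actset1 M : actset 1 M = M.
Proof.
have E : forall e : {set T}, [set (1%g : {perm T}) x | x in e] = e.
  by move=> e; apply: imset_fixin => x _; rewrite perm1.
by rewrite /actset (eq_imset _ E) imset_id.
Qed.

Lemma actsetM s t M : actset (s * t) M = actset t (actset s M).
Proof.
rewrite /actset -imset_comp; apply: eq_imset => e /=; rewrite -imset_comp.
by apply: eq_imset => x; rewrite permM.
Qed.

Lemma actsetK s M : actset s^-1 (actset s M) = M.
Proof. by rewrite -actsetM mulgV actset1. Qed.

Lemma actset_inj s : injective (actset s).
Proof. exact: can_inj (actsetK s). Qed.

Lemma actset_pmon s A M : M \in pmon A -> actset s M \in pmon [set s x | x in A].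
Proof.
move=> /pmonP[P C]; apply/pmonP; split.
  by rewrite /actset imset_partition //; exact: perm_inj.
move=> _ /imsetP[e eM ->]; rewrite card_imset; [exact: C | exact: perm_inj].
Qed.

Lemma actsetU1 s B M : actset s (B |: M) = [set s x | x in B] |: actset s M.
Proof. by rewrite /actset imsetU1. Qed.

Lemma imset2 s x y : [set s z | z in [set x; y]] = [set s x; s y].
Proof. by rewrite imsetU1 imset_set1. Qed.

Lemma pm_trans m A M N : #|A| = (2 * m)%N -> M \in pmon A -> N \in pmon A ->
  exists s, {in ~: A, forall x, s x = x} /\ actset s M = N.
Proof.
elim: m A M N => [|m IH] A M N cA MA NA.
  move: cA MA NA; rewrite muln0 => /eqP; rewrite cards_eq0 => /eqP ->.
  rewrite pmon0 !inE => /eqP -> /eqP ->; exists 1%g; split; first by move=> x _; rewrite perm1.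
  exact: actset1.
have : 0 < #|A| by rewrite cA muln_gt0.
move/card_gt0P => [x xA].
have [y yx By] := pm_partner MA xA.
have [z zx Bz] := pm_partner NA xA.
have yA : y \in A by rewrite (subsetP (pm_sub MA By)) // !inE eqxx orbT.
have zA : z \in A by rewrite (subsetP (pm_sub NA Bz)) // !inE eqxx orbT.
pose t := tperm y z.
have tfix : {in ~: A, forall a, t a = a}.
  by move=> a; rewrite inE => aA; apply: tpermD; apply: contraNneq aA => <-.
have tx : t x = x by rewrite /t tpermD.
have M1A : actset t M \in pmon A by have := actset_pmon t MA; rewrite imset_fix.
have B1 : [set x; z] \in actset t M.
  apply/imsetP; exists [set x; y] => //; by rewrite imset2 tx tpermL.
have c2 : #|A :\ x :\ z| = (2 * m)%N.
  have := cardsD1 x A; rewrite xA cA mulnS add1n add2n => -[] c1.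
  by have := cardsD1 z (A :\ x); rewrite !inE zx zA -c1 add1n => -[].
have [s' [s'fix Es']] := IH _ _ _ c2 (pm_rem M1A B1) (pm_rem NA Bz).
exists (t * s')%g; split.
  move=> a aA; rewrite permM tfix // s'fix //.
  by move: aA; rewrite !inE; apply: contra => /andP[_ /andP[]].
rewrite actsetM -(setD1K B1) actsetU1 Es' imset2 !s'fix ?setD1K // !inE ?eqxx //=.
by rewrite andbF.
Qed.

End Act.


Section Invol.
Variable T : finType.
Variable f : T -> T.
Hypothesis fK : involutive f.
Hypothesis fx : forall x, f x != x.

Definition invpm := [set [set x; f x] | x : T].

Lemma blk x z : z \in [set x; f x] -> [set x; f x] = [set z; f z].
Proof. by rewrite !inE => /orP[]/eqP->; rewrite // fK setUC. Qed.

Lemma invpm_pm : invpm \in pmon [set: T].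
Proof.
apply/pmonP; split.
  apply/and3P; split.
  - apply/eqP/setP => z; rewrite cover_imset inE; apply/bigcupP; exists z => //.
    by rewrite !inE eqxx.
  - apply/trivIsetP => _ _ /imsetP[x _ ->] /imsetP[y _ ->] ne.
    rewrite -setI_eq0; apply/eqP/setP => z; rewrite inE in_set0; apply/negP => /andP[zx zy].
    by move: ne; rewrite (blk zx) (blk zy) eqxx.
  - apply/imsetP => -[x _ E]; have : x \in set0 by rewrite E !inE eqxx.
    by rewrite in_set0.
by move=> _ /imsetP[x _ ->]; rewrite cards2 eq_sym fx.
Qed.

End Invol.

Section RR.
Variables (m j : nat).
Hypothesis mj : m = (2 * j).+1.

Definition rr (r x : nat) : nat :=
  if x == m then r else if x == r then m else (2 * r + m - x) %% m.

Lemma half a b : a < m -> b < m -> (2 * a == 2 * b %[mod m]) -> a = b.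
Proof.
move=> am bm /eqP E.
have H : forall c, c %% m = ((2 * c) %% m * (j + 1)) %% m.
  move=> c; rewrite modnMml -(modnMDl c c) mj; congr (_ %% _); lia.
by rewrite -(modn_small am) -(modn_small bm) H E -H.
Qed.

Lemma sumlem r x : x < m -> (x + (2 * r + m - x) %% m) = 2 * r %[mod m].
Proof.
move=> xm; rewrite modnDmr subnKC ?modnDr //; lia.
Qed.

Lemma rr_le r x : r < m -> rr r x <= m.
Proof.
move=> rm; rewrite /rr; case: eqP => _; first exact: ltnW.
case: eqP => _ //; apply: ltnW; rewrite ltn_mod mj //.
Qed.

Lemma rr_lt r x : r < m -> x != m -> x != r -> rr r x < m.
Proof. move=> rm /negbTE xm /negbTE xr; by rewrite /rr xm xr ltn_mod mj. Qed.

Lemma mpos : 0 < m. Proof. by rewrite mj. Qed.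

Lemma modeq a b : a < m -> b < m -> (a == b %[mod m]) -> a = b.
Proof. by move=> am bm; rewrite !modn_small // => /eqP. Qed.

Lemma rr_else r x : x != m -> x != r -> rr r x = (2 * r + m - x) %% m.
Proof. by move=> /negbTE xm /negbTE xr; rewrite /rr xm xr. Qed.

Lemma rr_yr r x : r < m -> x < m -> x != r -> (2 * r + m - x) %% m != r.
Proof.
move=> rm xm xr; apply/eqP => E.
have := sumlem r xm; rewrite E mul2n -addnn => /eqP; rewrite eqn_modDr => /(modeq xm rm) /eqP.
by rewrite (negbTE xr).
Qed.

Lemma rr_neq r x : r < m -> x <= m -> rr r x != x.
Proof.
move=> rm xle; have [xm|xm] := eqVneq x m.
  by rewrite /rr xm eqxx; apply: contraTneq rm => ->; rewrite ltnn.
have [xr|xr] := eqVneq x r.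
  have rnm : r != m by rewrite ltn_neqAle in rm; case/andP: rm.
  by rewrite /rr xr (negbTE rnm) eqxx eq_sym.
have xlt : x < m by rewrite ltn_neqAle xm.
rewrite rr_else //; apply/eqP => E.
have := sumlem r xlt; rewrite E addnn -mul2n => /eqP /(half xlt rm) /eqP.
by rewrite (negbTE xr).
Qed.

Lemma rrK r x : r < m -> x <= m -> rr r (rr r x) = x.
Proof.
move=> rm xle; have rnm : r != m by rewrite ltn_neqAle in rm; case/andP: rm.
have [xm|xm] := eqVneq x m.
  by rewrite xm /rr eqxx (negbTE rnm) eqxx.
have [xr|xr] := eqVneq x r.
  by rewrite xr /rr eqxx (negbTE rnm) eqxx.
have xlt : x < m by rewrite ltn_neqAle xm.
have yr := rr_yr rm xlt xr.
have ylt : (2 * r + m - x) %% m < m by rewrite ltn_mod mpos.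
have ym : (2 * r + m - x) %% m != m by rewrite ltn_eqF.
rewrite (rr_else xm xr) (rr_else ym yr).
apply: modeq; first by rewrite ltn_mod mpos.
  by [].
rewrite -(eqn_modDr ((2 * r + m - x) %% m)).
have e1 := sumlem r ylt; rewrite addnC in e1.
by rewrite e1 sumlem.
Qed.

Lemma rr_diff r s x : r < m -> s < m -> r != s -> x <= m -> rr r x != rr s x.
Proof.
move=> rm sm rs xle.
have rnm : r != m by rewrite ltn_neqAle in rm; case/andP: rm.
have snm : s != m by rewrite ltn_neqAle in sm; case/andP: sm.
have [xm|xm] := eqVneq x m; first by rewrite /rr xm eqxx.
have [xr|xr] := eqVneq x r.
  rewrite xr {1}/rr eqxx (negbTE rnm) rr_else //.
  by rewrite eq_sym ltn_eqF // ltn_mod mpos.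
have [xs|xs] := eqVneq x s.
  rewrite xs {2}/rr eqxx (negbTE snm) (rr_else snm); last by rewrite eq_sym.
  by rewrite ltn_eqF // ltn_mod mpos.
have xlt : x < m by rewrite ltn_neqAle xm.
rewrite !rr_else //; apply/eqP => E.
have := sumlem r xlt; rewrite E sumlem // => /eqP /(half sm rm) /eqP.
by rewrite eq_sym (negbTE rs).
Qed.

End RR.


Lemma is_pmE n (M : {set {set 'I_n}}) : (M \in pmon [set: 'I_n]) = is_pm M.
Proof. by rewrite inE. Qed.

Lemma imsetT_perm (T : finType) (s : {perm T}) : [set s x | x in [set: T]] = [set: T].
Proof. by apply: imset_fix => x; rewrite inE in_setT. Qed.

Lemma partner_spec (T : finType) x (A : {set T}) M : M \in pmon A -> x \in A ->
  partner x M != x /\ [set x; partner x M] \in M.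
Proof.
move=> MA xA; have [y yx By] := pm_partner MA xA.
by have := partnerP MA xA yx; rewrite By => /eqP ->.
Qed.

Section Main.
Variables (n j : nat).
Hypothesis hn : n = (2 * j).+2.

Let m := n.-1.
Let mj : m = (2 * j).+1. Proof. by rewrite /m hn. Qed.

Lemma act_is_pm (s : {perm 'I_n}) (M : pm n) : is_pm (actset s (val M)).
Proof. by rewrite -is_pmE -(imsetT_perm s) actset_pmon // is_pmE (valP M). Qed.

Definition act (s : {perm 'I_n}) (M : pm n) : pm n := exist (fun X => is_true (is_pm X)) _ (act_is_pm s M).

Lemma act_val s M : val (act s M) = pm_act_set s (val M).
Proof. by []. Qed.

Lemma actM s t M : act (s * t)%g M = act t (act s M).
Proof. by apply: val_inj; rewrite /= actsetM. Qed.

Lemma actK s : cancel (act s) (act s^-1).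
Proof. by move=> M; apply: val_inj; rewrite /= actsetK. Qed.

Lemma actKV s : cancel (act s^-1) (act s).
Proof. by move=> M; apply: val_inj; rewrite /= -{1}(invgK s) actsetK. Qed.

Lemma act_inj s : injective (act s).
Proof. exact: can_inj (actK s). Qed.

Lemma act_aut s : pm_aut (act s).
Proof.
split; first by exists (act s^-1); [exact: actK | exact: actKV].
move=> M N; rewrite /pm_adj /= /actset imset_disjoint //.
exact: imset_inj perm_inj.
Qed.

Lemma valpm (M : pm n) : val M \in pmon [set: 'I_n].
Proof. by rewrite is_pmE; exact: (valP M). Qed.

Lemma act_trans M N : exists s, act s M = N.
Proof.
have cT : #|[set: 'I_n]| = (2 * j.+1)%N by rewrite cardsT card_ord hn mulnS.
have [s [_ E]] := pm_trans cT (valpm M) (valpm N).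
by exists s; apply: val_inj.
Qed.


Lemma nm : n = m.+1. Proof. by rewrite mj hn. Qed.
Lemma n0 : 0 < n. Proof. by rewrite hn. Qed.
Lemma n1 : 1 < n. Proof. by rewrite hn. Qed.
Definition x0 : 'I_n := Ordinal n0.
Definition x1 : 'I_n := Ordinal n1.

Definition sig (r : nat) (x : 'I_n) : 'I_n := insubd x (rr m r x).

Lemma xle (x : 'I_n) : x <= m.
Proof. by rewrite -ltnS -nm. Qed.

Lemma val_sig r x : r < m -> val (sig r x) = rr m r x.
Proof.
move=> rm; rewrite val_insubd ifT //.
apply: (@leq_trans m.+1); first by rewrite ltnS (rr_le mj).
by rewrite -nm.
Qed.

Lemma sigK r : r < m -> involutive (sig r).
Proof. by move=> rm x; apply: val_inj; rewrite !val_sig // (rrK mj) // xle. Qed.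

Lemma sig_neq r x : r < m -> sig r x != x.
Proof. by move=> rm; rewrite -(inj_eq val_inj) val_sig // (rr_neq mj) // xle. Qed.

Lemma RR_pm (r : 'I_m) : is_pm (invpm (sig r)).
Proof.
rewrite -is_pmE; apply: invpm_pm; [exact: sigK | move=> x; exact: sig_neq].
Qed.

Definition RR (r : 'I_m) : pm n := exist (fun X => is_true (is_pm X)) _ (RR_pm r).

Lemma RR_disj (r s : 'I_m) : r != s -> pm_adj (RR r) (RR s).
Proof.
move=> rs; rewrite /pm_adj /=.
rewrite -setI_eq0; apply/eqP/setP => e; rewrite inE in_set0.
apply/negP => /andP[/imsetP[x _ ->] /imsetP[y _ E]].
have xin : x \in [set y; sig s y] by rewrite -E !inE eqxx.
rewrite (blk (sigK (ltn_ord s)) xin) in E.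
have : sig r x \in [set x; sig s x] by rewrite -E !inE eqxx orbT.
rewrite !inE (negbTE (sig_neq x (ltn_ord r))) /= -(inj_eq val_inj) !val_sig //.
by rewrite (negbTE (rr_diff mj (ltn_ord r) (ltn_ord s) _ (xle x))) // -(inj_eq val_inj).
Qed.

Definition Cq := [set RR r | r : 'I_m].

Lemma Cq_clique : is_clique Cq.
Proof.
move=> _ _ /imsetP[r _ ->] /imsetP[s _ ->] ne; apply: RR_disj.
by apply: contraNneq ne => ->.
Qed.

Lemma adj_irr (M : pm n) : ~~ pm_adj M M.
Proof.
have [y _ B] := pm_partner (valpm M) (in_setT x0).
by rewrite /pm_adj -setI_eq0 setIid; apply/eqP => E; move: B; rewrite E in_set0.
Qed.

Lemma card_Cq : #|Cq| = (2 * j.+1 - 1)%N.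
Proof.
rewrite card_imset ?card_ord -?mj ?mulnS //.
move=> r s E; apply/eqP; apply: contraT => rs.
by have := RR_disj rs; rewrite E (negbTE (adj_irr _)).
Qed.

Lemma clique_bound (S : {set pm n}) : is_clique S -> #|S| <= m.
Proof.
move=> cS.
pose h (M : pm n) := partner x0 (val M).
have hs M : h M != x0 /\ [set x0; h M] \in val M := partner_spec (valpm M) (in_setT x0).
rewrite -(card_in_imset (f := h)); last first.
  move=> M N MS NS E; apply/eqP; apply: contraT => MN.
  have := cS M N MS NS MN; rewrite /pm_adj -setI_eq0 => /eqP/setP/(_ [set x0; h M]).
  by rewrite in_set0 inE (hs M).2 E (hs N).2.
have : h @: S \subset [set~ x0].
  by apply/subsetP => _ /imsetP[M _ ->]; rewrite !inE (hs M).1.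
by move/subset_leq_card; rewrite cardsC1 card_ord. 
Qed.


Lemma cardT2 : #|[set: 'I_n]| = (2 * j.+1)%N.
Proof. by rewrite cardsT card_ord hn mulnS. Qed.

Lemma card_pm : #|{: pm n}| = odd_dfact j.+1.
Proof.
rewrite card_sig -(card_pmon cardT2); apply: eq_card => M.
by rewrite inE is_pmE.
Qed.

Definition S0 := [set M : pm n | [set x0; x1] \in val M].

Lemma S0_coclique : is_coclique S0.
Proof.
move=> M N; rewrite !inE => BM BN; rewrite /pm_adj -setI_eq0; apply/eqP.
by move/setP/(_ [set x0; x1]); rewrite in_set0 inE BM BN.
Qed.

Lemma x01 : x0 != x1. Proof. by []. Qed.

Lemma card_S0 : #|S0| = odd_dfact j.
Proof.
rewrite -(card_imset _ val_inj).
have -> : val @: S0 = [set M in pmon [set: 'I_n] | [set x0; x1] \in M].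
  apply/setP => M; rewrite inE; apply/imsetP/andP => [[N NS ->]|[MA BM]].
    by split; [exact: valpm | rewrite inE in NS].
  rewrite is_pmE in MA; exists (exist (fun X => is_true (is_pm X)) M MA) => //.
  by rewrite inE.
rewrite card_pmon_fix ?in_setT //; apply: card_pmon.
have := cardsD1 x0 [set: 'I_n]; rewrite in_setT cardT2 mulnS add1n add2n => -[] c1.
by have := cardsD1 x1 ([set: 'I_n] :\ x0); rewrite !inE eq_sym x01 -c1 add1n => -[].
Qed.


Definition N0 : pm n := RR (Ordinal (mpos mj)).
Definition cc := \sum_(u : {perm 'I_n}) (act u N0 == N0 : nat).

Lemma cst N M : \sum_(s : {perm 'I_n}) (act s N == M : nat) = cc.
Proof.
have [s1 E1] := act_trans N0 N; have [s2 E2] := act_trans N0 M.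
rewrite (reindex_inj (h := fun u => (s1^-1 * u * s2)%g)); last first.
  by move=> u v /mulIg /mulgI.
apply: eq_bigr => u _.
by rewrite !actM -E1 actK -E2 (inj_eq (@act_inj _)).
Qed.

Lemma ccpos : 0 < cc.
Proof.
rewrite /cc (bigD1 1%g) //= (_ : act 1 N0 = N0) ?eqxx //.
by apply: val_inj; rewrite /= actset1.
Qed.

Lemma total : #|{: pm n}| * cc = #|{: {perm 'I_n}}|.
Proof.
have H : \sum_(M : pm n) \sum_(s : {perm 'I_n}) (act s N0 == M : nat) = #|{: {perm 'I_n}}|.
  rewrite exchange_big /= -sum1_card; apply: eq_bigr => s _.
  rewrite (bigD1 (act s N0)) //= eqxx big1 // => M.
  by rewrite eq_sym => /negbTE ->.
by rewrite -H (eq_bigr (fun _ => cc)) ?sum_nat_const // => M _; exact: cst.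
Qed.

Lemma per_s (S C : {set pm n}) s : is_coclique S -> is_clique C ->
  \sum_(N in C) \sum_(M in S) (act s N == M : nat) <= 1.
Proof.
move=> coS cC.
have inner N : \sum_(M in S) (act s N == M : nat) = (act s N \in S).
  case: (boolP (act s N \in S)) => AS.
    rewrite (bigD1 (act s N)) //= eqxx big1 // => M /andP[_].
    by rewrite eq_sym => /negbTE ->.
  by rewrite big1 // => M MS; case: eqP => // E; move: AS; rewrite E MS.
rewrite (eq_bigr _ (fun N _ => inner N)).
case: (pickP [pred N | (N \in C) && (act s N \in S)]) => [N1 /andP[N1C N1S] | none].
  rewrite (bigD1 N1) //= N1S big1 // => N /andP[NC NN1].
  case: (boolP (act s N \in S)) => // NS.
  have := cC N N1 NC N1C NN1; rewrite -((act_aut s).2 N N1).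
  by rewrite (negbTE (coS _ _ NS N1S)).
by rewrite big1 // => N NC; have := none N; rewrite /= NC /= => ->.
Qed.

Lemma cocl_bound (S : {set pm n}) : is_coclique S -> #|S| <= odd_dfact j.
Proof.
move=> coS.
have key : \sum_(s : {perm 'I_n}) \sum_(N in Cq) \sum_(M in S) (act s N == M : nat)
           <= #|{: {perm 'I_n}}|.
  apply: (@leq_trans (\sum_(s : {perm 'I_n}) 1)); last by rewrite sum1_card.
  by apply: leq_sum => s _; apply: per_s => //; exact: Cq_clique.
rewrite exchange_big /= (eq_bigr (fun _ => #|S| * cc)) in key; last first.
  move=> N _; rewrite exchange_big /= (eq_bigr (fun _ => cc)) ?sum_nat_const //.
  by move=> M _; exact: cst.
rewrite sum_nat_const card_Cq -total card_pm mulnA in key.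
rewrite leq_pmul2r ?ccpos // in key.
rewrite /odd_dfact big_ord_recr /= -/(odd_dfact j) in key.
have E : (2 * j.+1 - 1 = 2 * j + 1)%N by rewrite mulnS subn1 addn1.
rewrite E in key.
by rewrite mulnC leq_pmul2r ?addn1 in key.
Qed.

End Main.

Theorem theorem3p3 (k : nat) (hk : 0 < k) :
  (* (1) vertex transitivity *)
  (forall M N : pm (2 * k), exists f, pm_aut f /\ f M = N) /\
  (* (1') the natural Sym(2k) action gives automorphisms acting transitively *)
  (exists act : {perm 'I_(2 * k)} -> pm (2 * k) -> pm (2 * k),
     (forall s M, val (act s M) = pm_act_set s (val M)) /\
     (forall s, pm_aut (act s)) /\
     (forall M N, exists s, act s M = N)) /\
  (* (2) maximum clique size is 2k-1 *)
  ((exists S : {set pm (2 * k)}, is_clique S /\ #|S| = 2 * k - 1) /\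
   (forall S : {set pm (2 * k)}, is_clique S -> #|S| <= 2 * k - 1)) /\
  (* (3) maximum coclique size is (2k-3)!! *)
  ((exists S : {set pm (2 * k)}, is_coclique S /\ #|S| = odd_dfact k.-1) /\
   (forall S : {set pm (2 * k)}, is_coclique S -> #|S| <= odd_dfact k.-1)).
Proof.
case: k hk => // j _.
have hn : (2 * j.+1 = (2 * j).+2)%N by rewrite mulnS.
split.
  move=> M N; have [s E] := act_trans hn M N.
  by exists (act s); split => //; exact: act_aut.
split.
  exists (@act _); split; first by [].
  split; [exact: act_aut | exact: act_trans hn].
split.
  split; first by exists (Cq hn); split; [exact: Cq_clique | exact: card_Cq].
  by move=> S cS; rewrite subn1; exact: clique_bound hn S cS.
split; first by exists (S0 hn); split; [exact: S0_coclique | exact: card_S0].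
move=> S cS; exact: cocl_bound hn S cS.
Qed.
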